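(* Let $\mathfrak{g}$ be a finite-dimensional simple Lie algebra over $\mathbb{C}$ equipped with a $\mathbb{Z}_n$-grading $\mathfrak{g}=\bigoplus_{i\in\mathbb{Z}_n}\mathfrak{g}_i$ (so $[\mathfrak{g}_i,\mathfrak{g}_j]\subseteq\mathfrak{g}_{i+j}$). Let $j\in\mathbb{Z}_n$ and suppose $h\in\mathfrak{g}_j$ is a semisimple element with $[\mathfrak{g}_0,h]=0$. Then $h$ lies in the center of the subalgebra $\mathfrak{g}^{(j)}:=\bigoplus_{m\in\mathbb{Z}}\mathfrak{g}_{mj}$. In particular, if $j$ is a unit in $\mathbb{Z}_n$, then $h=0$.
   Context: $\mathfrak{g}_0$ denotes the grade-zero component, which is a (reductive) Lie subalgebra of $\mathfrak{g}$. The index $mj$ is computed in $\mathbb{Z}_n$. *)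

(* Defs.v *)
(* Lie algebras over C are modelled as finite-dimensional
   vector spaces (vectType) over C := R[i] (complex numbers built on a
   realType R, i.e. the complex field) with a bracket satisfying the axioms. *)
From HB Require Import structures.
From mathcomp Require Import all_boot all_order all_algebra.
From mathcomp Require Import reals.
From mathcomp Require Import complex.
Set Implicit Arguments. Unset Strict Implicit. Unset Printing Implicit Defensive.
Import Order.TTheory GRing.Theory Num.Theory.
Local Open Scope ring_scope.

Section LieDefs.
Variables (F : fieldType) (V : vectType F).

Definition is_lie_bracket (br : V -> V -> V) : Prop :=
  [/\ (forall a x y z, br (a *: x + y) z = a *: br x z + br y z),
      (forall a x y z, br z (a *: x + y) = a *: br z x + br z y),
      (forall x, br x x = 0) &
      (forall x y z, br x (br y z) + br y (br z x) + br z (br x y) = 0)].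

Definition is_lie_ideal (br : V -> V -> V) (I : {vspace V}) : Prop :=
  forall x y, y \in I -> br x y \in I.

Definition is_simple_lie (br : V -> V -> V) : Prop :=
  is_lie_bracket br /\
  (exists x y, br x y != 0) /\
  (forall I : {vspace V}, is_lie_ideal br I -> I = 0%VS \/ I = fullv).

(* A Z_n-grading (n > 0): G i for i < n are the graded pieces (indices are
   taken modulo n); V is their direct sum and [G i, G j] <= G ((i+j) mod n). *)
Definition is_Zn_grading (br : V -> V -> V) (n : nat) (G : nat -> {vspace V}) : Prop :=
  [/\ directv (\sum_(i < n) G i)%VS,
      (\sum_(i < n) G i)%VS = fullv &
      (forall i j x y, (i < n)%N -> (j < n)%N -> x \in G i -> y \in G j ->
         br x y \in G ((i + j) %% n)%N)].

(* h is a semisimple element: ad h = br h is diagonalizable, i.e. V has a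
   basis of eigenvectors of ad h. *)
Definition is_semisimple_elt (br : V -> V -> V) (h : V) : Prop :=
  exists b : seq V, basis_of fullv b /\
    (forall v, v \in b -> exists c : F, br h v = c *: v).

(* g^(j) := \bigoplus_{m in Z} g_{m j}; as m ranges over Z, m j mod n
   ranges over {m j mod n | 0 <= m < n}. *)
Definition graded_subalg (n : nat) (G : nat -> {vspace V}) (j : nat) : {vspace V} :=
  (\sum_(m < n) G ((m * j) %% n)%N)%VS.

Definition in_center (br : V -> V -> V) (S : {vspace V}) (h : V) : Prop :=
  h \in S /\ (forall x, x \in S -> br h x = 0).

End LieDefs.

(* Main.v *)
Require Import Defs.
From HB Require Import structures.
From mathcomp Require Import all_boot all_order all_algebra.
From mathcomp Require Import reals.
From mathcomp Require Import complex.
Import Order.TTheory GRing.Theory Num.Theory.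
Local Open Scope ring_scope.

Theorem proposition1p4 (R : realType) (V : vectType R[i]) (br : V -> V -> V)
  (n : nat) (G : nat -> {vspace V}) (j : nat) (h : V) :
  is_simple_lie br -> (0 < n)%N -> is_Zn_grading br n G ->
  (j < n)%N -> h \in G j -> is_semisimple_elt br h ->
  (forall x, x \in G 0%N -> br x h = 0) ->
  in_center br (graded_subalg n G j) h /\ (coprime j n -> h = 0).
Proof.
case=> Hlie [[x0 [y0 Hxy]] Hsimple] n0 [Hdir Hfull Hgr] jn hG [b [Hb Heig]] H0.
case: (Hlie) => HL HR Halt Hjac.
have br0l z : br 0 z = 0.
  have := HL 1 0 0 z; rewrite !scale1r addr0 => e.
  by apply/esym/(addrI (br 0 z)); rewrite addr0 -e.
have br0r z : br z 0 = 0.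
  have := HR 1 0 0 z; rewrite !scale1r addr0 => e.
  by apply/esym/(addrI (br z 0)); rewrite addr0 -e.
have brDl x y z : br (x + y) z = br x z + br y z by have := HL 1 x y z; rewrite !scale1r.
have brDr x y z : br z (x + y) = br z x + br z y by have := HR 1 x y z; rewrite !scale1r.
have brZl a x z : br (a *: x) z = a *: br x z by have := HL a x 0 z; rewrite !addr0 br0l addr0.
have brZr a x z : br z (a *: x) = a *: br z x by have := HR a x 0 z; rewrite !addr0 br0r addr0.
have anti x y : br x y = - br y x.
  have := Halt (x + y); rewrite brDl !brDr !Halt add0r addr0 => /eqP.
  by rewrite addr_eq0 => /eqP.
pose d := br h.
have d_sum (I : Type) (r : seq I) (P : pred I) (F : I -> V) :
   d (\sum_(i <- r | P i) F i) = \sum_(i <- r | P i) d (F i).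
  by apply: (big_morph d (fun x y => brDr x y h)); rewrite /d br0r.
pose pi := sumv_pi_for (erefl (\sum_(i < n) G i)%VS).
have piG (i : 'I_n) v : pi i v \in G i by exact: memv_sum_pi.
have pisum v : \sum_(i < n) pi i v = v.
  by apply: sumv_pi_sum; rewrite Hfull memvf.
have piU (us : 'I_n -> V) k : (forall i : 'I_n, us i \in G i) ->
    pi k (\sum_(i < n) us i) = us k.
  move=> Hus; move/directv_sum_unique: Hdir => U.
  have := U (fun i => pi i (\sum_(i < n) us i)) us (fun i _ => piG i _) (fun i _ => Hus i).
  rewrite pisum eqxx => /esym/forall_inP/(_ k isT)/eqP; done.
have piself (k : 'I_n) z : z \in G k -> pi k z = z.
  move=> Hz; have e : \sum_(i < n) (if i == k then z else 0) = z.
    by rewrite (bigD1 k) //= eqxx big1 ?addr0 // => i /negPf ->.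
  have := piU (fun i => if i == k then z else 0) k; rewrite e eqxx; apply.
  by move=> i; case: eqP => [->|_] //; rewrite mem0v.
pose ord := fun a : nat => (Ordinal (ltn_pmod a n0) : 'I_n).
pose sg := fun i : 'I_n => ord (i + j)%N.
have sgG (i : 'I_n) w : w \in G i -> d w \in G (sg i).
  by move=> Hw; have := Hgr j i h w jn (ltn_ord i) hG Hw; rewrite addnC.
have sg_inj : injective sg.
  move=> i k /(congr1 val) /= /eqP; rewrite eqn_modDr !modn_small // => /eqP.
  exact: val_inj.
have F1 a v : pi (ord (a + j)%N) (d v) = d (pi (ord a) v).
  rewrite -{1}(pisum v) d_sum (partition_big sg xpredT) //=.
  rewrite piU; last first.
    by move=> k; apply: memv_suml => i /eqP <-; apply: sgG; apply: piG.
  have -> : ord (a + j)%N = sg (ord a) by apply: val_inj; rewrite /= modnDml.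
  by rewrite (big_pred1 (ord a)) // => i /=; rewrite (inj_eq sg_inj).
have IT t a v : pi (ord (a + t * j)%N) (iter t d v) = iter t d (pi (ord a) v).
  elim: t a v => [|t IH] a v; first by rewrite mul0n addn0.
  by rewrite mulSn addnCA addnC /= F1 IH.
have dZ a x : d (a *: x) = a *: d x by exact: brZr.
have d0 : d 0 = 0 by exact: br0r.
have iter0 t : iter t d 0 = 0 by elim: t => //= t ->.
have iter_eig c u t : d u = c *: u -> iter t d u = c ^+ t *: u.
  move=> e; elim: t => [|t IH]; first by rewrite expr0 scale1r.
  by rewrite /= IH dZ e scalerA exprSr.
have dG0 w : w \in G 0%N -> d w = 0.
  by move=> Hw; rewrite /d anti H0 // oppr0.
have E c u k : c != 0 -> d u = c *: u -> pi (ord (k * j)%N) u = 0.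
  move=> cne0 eu.
  have R0 t : iter t.+1 d (pi (ord 0%N) u) = 0.
    rewrite iterSr dG0 ?iter0 //; have := piG (ord 0%N) u; by rewrite /= mod0n.
  pose t := (k + n.-1).+1.
  have e : ord (0 + t * j)%N = ord (k * j)%N.
    apply: val_inj; rewrite /= /t -addnS prednK // mulnDl [(n * j)%N]mulnC addnC.
    by rewrite addn0 addnC modnMDl.
  have := IT t 0%N u; rewrite e (iter_eig c) // R0 linearZ => /eqP.
  by rewrite scaler_eq0 expf_eq0 (negPf cne0) andbF /= => /eqP.
have Qb m u : u \in b -> d (pi (ord (m * j)%N) u) = 0.
  move=> /Heig [c ec]; have ec2 : d u = c *: u := ec; rewrite -F1 ec2 linearZ /= -[(m * j + j)%N]addnC -mulSn.
  have [-> | cne0] := eqVneq c 0; first by rewrite scale0r.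
  by rewrite (E c) // scaler0.
have Q m v : d (pi (ord (m * j)%N) v) = 0.
  have vin : v \in span (in_tuple b) by rewrite (span_basis Hb) memvf.
  rewrite (coord_span vin) linear_sum d_sum big1 // => i _.
  by rewrite linearZ dZ Qb ?scaler0 // mem_nth.
have key m z : z \in G ((m * j) %% n)%N -> br h z = 0.
  by move=> Hz; rewrite -(piself (ord (m * j)%N) z Hz); exact: Q.
split.
  split.
    apply/memv_sumP; exists (fun m : 'I_n => if m == ord 1%N then h else 0).
      move=> m _; case: eqP => [->|_]; last by rewrite mem0v.
      by rewrite /= modnMml mul1n modn_small.
    by rewrite (bigD1 (ord 1%N)) //= eqxx big1 ?addr0 // => i /negPf ->.
  move=> x /memv_sumP [vs Hvs ->]; rewrite -/d d_sum big1 // => m _.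
  exact: key (Hvs m isT).
move=> cop.
have hall x : br h x = 0.
  rewrite -(pisum x) -/d d_sum big1 // => i _.
  have [m Hm] : exists m, ((m * j) %% n)%N = i.
    case: (posnP j) => [j0 | jpos].
      move: cop; rewrite j0 /coprime gcd0n => /eqP n1.
      exists 0%N; have := ltn_ord i; rewrite {2}n1 ltnS leqn0 => /eqP ->.
      by rewrite mul0n mod0n.
    case: (egcdnP n jpos) => km kn e _.
    exists (km * i)%N; rewrite mulnAC e (eqnP cop) mulnDl mul1n.
    by rewrite mulnAC modnMDl modn_small.
  have -> : i = ord (m * j)%N by apply: val_inj; rewrite /= Hm.
  exact: Q.
have Iid : is_lie_ideal br <[h]>%VS.
  by move=> x y /vlineP [a ->]; rewrite brZr anti hall oppr0 scaler0 mem0v.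
case: (Hsimple _ Iid) => [I0 | If].
  by have := memv_line h; rewrite I0 memv0 => /eqP.
have := memvf x0; rewrite -If => /vlineP [a ex0].
by move: Hxy; rewrite ex0 brZl hall scaler0 eqxx.
Qed.
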